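(* Let $\mathcal{N}$ be a non-degenerate GFNN with $D$-dimensional output, let $\rho$ be a nonlinearity, and let $A,B$ be disjoint sets of nodes of $\mathcal{N}$ with a common parent set such that $\mathcal{N}$ admits a $(\rho;A,B,C)$-modification. Then there exists a set $B^*\subset B$ such that $\mathcal{N}$ admits a non-degenerate $(\rho;A\cup B^*,B\setminus B^*,C)$-modification $\mathcal{N}'$.
   Context: A nonlinearity is a continuous $\rho:\mathbb{R}\to\mathbb{R}$ not of the form $t\mapsto at+b$. GFNN with $D$-dim output: $\mathcal{N}=(V,E,V_{\mathrm{in}},V_{\mathrm{out}},\Omega,\Theta,\Lambda)$, $(V,E)$ finite loopless DAG, $V_{\mathrm{in}}$ the parentless nodes, $V_{\mathrm{out}}\subset V\setminus V_{\mathrm{in}}$, nonzero real weights $\omega_{\tilde vv}$ on edges $(v,\tilde v)$, real biases $\theta_v$ on non-input nodes, real output scalars $\lambda^{(r)},\lambda^{(r)}_w$. $\mathrm{anc}(S)$: nodes with a directed path (length $\ge0$) into $S$. Non-degenerate: $V\setminus V_{\mathrm{in}}\subset\mathrm{anc}(V_{\mathrm{out}})$ and each $w\in V_{\mathrm{out}}$ has some $\lambda^{(r)}_w\ne0$. Affine symmetry of $\rho$: $(\zeta,\{(\alpha_s,\beta_s,\gamma_s)\}_{s\in\mathcal{I}})$, $\mathcal{I}$ nonempty finite, $\sum_s\alpha_s\rho(\beta_st+\gamma_s)=\zeta$ $\forall t$, no proper $\mathcal{I}'$ with $\{\rho(\beta_s\cdot+\gamma_s)\}_{\mathcal{I}'}\cup\{\mathbf1\}$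 linearly dependent. Irreducible: there is no nonempty $U$ with common parent set $P_U$, nonzero $\kappa_v,\beta_u$ with $\omega_{uv}=\beta_u\kappa_v$, and $\zeta$, nonzero $\alpha_u$ with $(\zeta,\{(\alpha_u,\beta_u,\theta_u)\}_{u\in U})$ an affine symmetry. $(\rho;A,B,C)$-modification of an irreducible $\mathcal{N}$: $A,B\subset V\setminus V_{\mathrm{in}}$ disjoint, $A\ne\varnothing$, common parent set $P$, $W=\{w:\mathrm{par}(w)\cap A\ne\varnothing\}$, $C=\{u'_1,\dots,u'_n\}$ ($n\ge1$) new nodes; require (i) an affine symmetry $(\zeta,\{(\alpha_u,\beta_u,\theta_u)\}_{u\in A\cup B}\cup\{(\alpha'_p,\beta'_p,\gamma'_p)\}_{p=1}^n)$; (ii) nonzero $\kappa_v$ with $\omega_{uv}=\beta_u\kappa_v$ ($u\in A\cup B,v\in P$); (iii) $A\subset\mathrm{par}(w)$ for $w\in W$, nonzero $\nu_w$ with $\omega_{wu}=\nu_w\alpha_u$; (iv) $A\cap V_{\mathrm{out}}=\varnothing$, or $A\subset V_{\mathrm{out}}$ with reals $\mu_r$, $\lambda^{(r)}_u=\mu_r\alpha_u$. Then: delete $A$ and incident edges; add $C$ with edges $(v,u'_p)$ of weight $\beta'_p\kappa_v$, bias $\gamma'_p$, edges $(u'_p,w)$ of weight $-\alpha'_p\nu_w$; $\theta_w\mapsto\theta_w+\zeta\nu_w$; for $w\in W,u\in B$: add edge with weight $-\alpha_u\nu_w$ if absent, else $\omega_{wu}\mapsto\omega_{wu}-\alpha_u\nu_w$,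 deleting the edge if $0$. If $A\subset V_{\mathrm{out}}$: $\lambda^{(r)}\mapsto\lambda^{(r)}+\zeta\mu_r$, $\lambda^{(r)}_{u'_p}=-\alpha'_p\mu_r$, for $u\in B$ $\lambda^{(r)}_u$ ($0$ if $u\notin V_{\mathrm{out}}$) $\mapsto\lambda^{(r)}_u-\alpha_u\mu_r$, new output set $(V_{\mathrm{out}}\setminus(A\cup B))\cup C\cup\{u\in B:\text{some new }\lambda^{(r)}_u\ne0\}$; else outputs unchanged. $\mathcal{N}$ admits a $(\rho;A,B,C)$-modification if such data exist. *)

(* Defs.v *)
From HB Require Import structures.
From mathcomp Require Import all_boot all_order all_algebra.
From mathcomp Require Import finmap.
From mathcomp Require Import all_classical all_reals all_analysis.

Set Implicit Arguments.
Unset Strict Implicit.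
Unset Printing Implicit Defensive.

Import Order.TTheory GRing.Theory Num.Theory.
Import numFieldNormedType.Exports.
Local Open Scope fset_scope.
Local Open Scope ring_scope.

Definition nonlinearity (R : realType) (rho : R -> R) : Prop :=
  continuous rho /\ ~ (exists a b : R, forall t, rho t = a * t + b).

(* Nodes are natural numbers; [nodes] is the finite node set V.
   [wt v' v] is the weight omega_{v' v} of the edge (v, v'); the edge set
   is E = {(v,v') | wt v' v <> 0} (weights on edges are nonzero).
   [bias v] = theta_v (only meaningful on non-input nodes).
   [outs] = V_out, [lam0 r] = lambda^(r), [lam r w] = lambda^(r)_w. *)
Record gfnn (R : realType) (D : nat) := Gfnn {
  nodes : {fset nat};
  wt : nat -> nat -> R;
  bias : nat -> R;
  outs : {fset nat};
  lam0 : 'I_D -> R;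
  lam : 'I_D -> nat -> R }.

Section Defs.
Variables (R : realType) (D : nat).

Definition gfnn_par (N : gfnn R D) (v : nat) : {fset nat} :=
  [fset u in nodes N | wt N v u != 0].

Definition gfnn_inputs (N : gfnn R D) : {fset nat} :=
  [fset v in nodes N | gfnn_par N v == fset0].

Definition is_gfnn (N : gfnn R D) : Prop :=
  [/\ (forall u v, wt N v u != 0 -> (u \in nodes N) && (v \in nodes N)),
      (exists rk : nat -> nat, forall u v, wt N v u != 0 -> (rk u < rk v)%N),
      outs N `<=` nodes N `\` gfnn_inputs N
    & (forall r w, lam N r w != 0 -> w \in outs N)].

Inductive gfnn_reach (N : gfnn R D) : nat -> nat -> Prop :=
  | reach0 u : gfnn_reach N u u
  | reachS u v w : wt N v u != 0 -> gfnn_reach N v w -> gfnn_reach N u w.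

Definition in_anc (N : gfnn R D) (S : {fset nat}) (v : nat) : Prop :=
  v \in nodes N /\ exists2 w, w \in S & gfnn_reach N v w.

Definition gfnn_nondegenerate (N : gfnn R D) : Prop :=
  (forall v, v \in nodes N `\` gfnn_inputs N -> in_anc N (outs N) v) /\
  (forall w, w \in outs N -> exists r, lam N r w != 0).

Definition affsym (rho : R -> R) (zeta : R) (S : {fset nat})
    (a b g : nat -> R) : Prop :=
  [/\ S != fset0,
      (forall t, \sum_(s <- S) a s * rho (b s * t + g s) = zeta)
    & (forall S', S' `<` S -> forall (c : nat -> R) (c0 : R),
         (forall t, \sum_(s <- S') c s * rho (b s * t + g s) + c0 = 0) ->
         c0 = 0 /\ (forall s, s \in S' -> c s = 0))].

Definition gfnn_irreducible (rho : R -> R) (N : gfnn R D) : Prop :=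
  ~ exists (U P : {fset nat}) (kappa beta alpha : nat -> R) (zeta : R),
      [/\ U != fset0, U `<=` nodes N `\` gfnn_inputs N,
          (forall u, u \in U -> gfnn_par N u = P),
          (forall v, v \in P -> kappa v != 0)
        & [/\ (forall u, u \in U -> beta u != 0 /\ alpha u != 0),
               (forall u v, u \in U -> v \in P -> wt N u v = beta u * kappa v)
             & affsym rho zeta U alpha beta (bias N)]].

Definition Wset (N : gfnn R D) (A : {fset nat}) : {fset nat} :=
  [fset w in nodes N | gfnn_par N w `&` A != fset0].

(* The modified network (construction of the (rho;A,B,C)-modification
   from its data).  P is the common parent set of A u B. *)
Definition modnet (N : gfnn R D) (A B C P : {fset nat}) (zeta : R)
    (alpha beta gamma kappa nu : nat -> R) (mu : 'I_D -> R) : gfnn R D :=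
  let W := Wset N A in
  let wt' := fun x y =>
    if (x \in A) || (y \in A) then 0
    else if x \in C then (if y \in P then beta x * kappa y else 0)
    else if y \in C then (if x \in W then - (alpha y * nu x) else 0)
    else if (x \in W) && (y \in B) then wt N x y - alpha y * nu x
    else wt N x y in
  let bias' := fun x =>
    if x \in W then bias N x + zeta * nu x
    else if x \in C then gamma x else bias N x in
  let lamA := fun r u =>
    if u \in C then - (alpha u * mu r)
    else if u \in B then lam N r u - alpha u * mu r
    else if u \in A then 0 else lam N r u in
  if A `<=` outs N then
    Gfnn ((nodes N `\` A) `|` C) wt' bias'
      (((outs N `\` (A `|` B)) `|` C) `|`
         [fset u in B | [exists r : 'I_D, lamA r u != 0]])
      (fun r => lam0 N r + zeta * mu r) lamA
  else
    Gfnn ((nodes N `\` A) `|` C) wt' bias' (outs N) (lam0 N) (lam N).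

Definition is_modification (rho : R -> R) (N : gfnn R D) (A B C : {fset nat})
    (N' : gfnn R D) : Prop :=
  gfnn_irreducible rho N /\
  exists (P : {fset nat}) (zeta : R) (alpha beta gamma kappa nu : nat -> R)
         (mu : 'I_D -> R),
    [/\ [/\ A `<=` nodes N `\` gfnn_inputs N, B `<=` nodes N `\` gfnn_inputs N,
            A `&` B == fset0, A != fset0
          & (forall u, u \in A `|` B -> gfnn_par N u = P)],
        C != fset0 /\ C `&` nodes N == fset0,
        affsym rho zeta (A `|` B `|` C) alpha beta gamma /\
          (forall u, u \in A `|` B -> gamma u = bias N u),
        (forall v, v \in P -> kappa v != 0) /\
          (forall u v, u \in A `|` B -> v \in P -> wt N u v = beta u * kappa v)
      & [/\
        (forall w, w \in Wset N A ->
           [/\ A `<=` gfnn_par N w, nu w != 0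
             & forall u, u \in A -> wt N w u = nu w * alpha u]),
        (A `&` outs N == fset0 \/
           (A `<=` outs N /\ forall r u, u \in A -> lam N r u = mu r * alpha u))
          & N' = modnet N A B C P zeta alpha beta gamma kappa nu mu]].

End Defs.

(* Main.v *)
Require Import Defs.
From HB Require Import structures.
From mathcomp Require Import all_boot all_order all_algebra.
From mathcomp Require Import finmap.
From mathcomp Require Import all_classical all_reals all_analysis.
From mathcomp Require Import ring lra zify.
Import Order.TTheory GRing.Theory Num.Theory.
Local Open Scope fset_scope.

Set Implicit Arguments.
Unset Strict Implicit.
Local Open Scope ring_scope.

Lemma affsym_alpha (R : realType) (rho : R -> R) zeta (S : {fset nat}) (a b g : nat -> R) s0 :
  affsym rho zeta S a b g -> s0 \in S -> a s0 != 0 -> forall s, s \in S -> a s != 0.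
Proof.
case=> _ Hsum Hmin Hs0 Ha0 s Hs; apply/negP => /eqP Has.
have := Hmin (S `\ s) (fproperD1 Hs) a (- zeta).
case.
  move=> t; rewrite -(Hsum t) (big_fsetD1 _ Hs) /= Has mul0r add0r.
  by rewrite subrr.
move=> _ H; case: (eqVneq s0 s) => [Hes|Hne].
  by move: Ha0; rewrite Hes Has eqxx.
by move: Ha0; rewrite H ?eqxx // in_fsetD1 Hne Hs0.
Qed.

Lemma affsym_beta (R : realType) (rho : R -> R) zeta (S : {fset nat}) (a b g : nat -> R) s0 s1 :
  affsym rho zeta S a b g -> s0 \in S -> s1 \in S -> s0 != s1 -> a s0 != 0 ->
  forall s, s \in S -> b s != 0.
Proof.
move=> Haff Hs0 Hs1 Hne Ha0.
have Hal := affsym_alpha Haff Hs0 Ha0.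
case: Haff => _ Hsum Hmin s Hs; apply/negP => /eqP Hbs.
have := Hmin (S `\ s) (fproperD1 Hs) a (a s * rho (g s) - zeta).
case.
  move=> t; rewrite -(Hsum t) (big_fsetD1 _ Hs) /= Hbs mul0r add0r.
  by ring.
move=> _ H.
have [x [Hx Hxs]] : exists x, x \in S /\ x != s.
  case: (eqVneq s0 s) => [E|E]; last by exists s0.
  by exists s1; split=> //; rewrite -E eq_sym.
by move: (Hal x Hx); rewrite H ?eqxx // in_fsetD1 Hxs Hx.
Qed.

Lemma reach_inv (R : realType) (D : nat) (N : gfnn R D) u w :
  gfnn_reach N u w -> u = w \/ exists v, wt N v u != 0 /\ gfnn_reach N v w.
Proof. by case=> [x|x v y H1 H2]; [left|right; exists v]. Qed.

Local Close Scope ring_scope.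
Unset Implicit Arguments.
Set Strict Implicit.

Theorem lemma4 (R : realType) (D : nat) (rho : R -> R) (N : gfnn R D)
    (A B C : {fset nat}) :
  nonlinearity rho -> is_gfnn N -> gfnn_nondegenerate N ->
  (exists N' : gfnn R D, is_modification rho N A B C N') ->
  exists2 Bs : {fset nat}, Bs `<=` B &
    exists N' : gfnn R D,
      is_modification rho N (A `|` Bs) (B `\` Bs) C N' /\ gfnn_nondegenerate N'.
Proof.
move=> _ [Hedge [rk Hrk] Houts Hlam] [Hnd1 Hnd2].
move=> [N0 [Hirr [P [zeta [alpha [beta [gamma [kappa [nu [mu
  [[HA HB HAB HA0 HPar] [HC0 HCN] [Haff Hgam] [Hkap Hwt] [HW Hiv _]]]]]]]]]]]].
Local Open Scope ring_scope.
have Hnod : forall u v, wt N v u != 0 -> u \in nodes N /\ v \in nodes N.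
  by move=> u v /Hedge /andP.
have Hpar : forall u v, (u \in gfnn_par N v) = (u \in nodes N) && (wt N v u != 0).
  by move=> u v; rewrite /gfnn_par !inE.
have Hnoloop : forall u, wt N u u = 0.
  by move=> u; apply/eqP; apply/negP => /negP /Hrk; rewrite ltnn.
have HAn : forall x, x \in A -> x \in nodes N.
  by move=> x /(fsubsetP HA); rewrite in_fsetD => /andP [].
have HBn : forall x, x \in B -> x \in nodes N.
  by move=> x /(fsubsetP HB); rewrite in_fsetD => /andP [].
have HABP : forall x v, x \in A `|` B -> (v \in P) = (v \in nodes N) && (wt N x v != 0).
  by move=> x v Hx; rewrite -(HPar x) // Hpar.
have HAB0 : forall x y, x \in A `|` B -> y \in A `|` B -> wt N y x = 0.
  move=> x y Hx Hy; apply/eqP; apply/negP => /negP H.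
  have := Hnod _ _ H => [[Hxn _]].
  have : x \in P by rewrite (HABP y) // Hxn.
  by rewrite (HABP x) // Hnoloop eqxx andbF.
have HCn : forall c, c \in C -> c \notin nodes N.
  move=> c Hc; apply/negP => Hcn; move/eqP: HCN => /fsetP /(_ c).
  by rewrite !inE Hc Hcn.
have [a0 Ha0] : exists a, a \in A by apply/fset0Pn.
have [c0 Hc0] : exists c, c \in C by apply/fset0Pn.
have HWo : forall w a, a \in A -> wt N w a != 0 -> w \in Wset N A.
  move=> w a Ha Hw; rewrite /Wset !inE (proj2 (Hnod _ _ Hw)) /=.
  by apply/fset0Pn; exists a; rewrite !inE (HAn _ Ha) Hw Ha.
have HWn : forall w, w \in Wset N A -> w \in nodes N.
  by move=> w; rewrite /Wset !inE => /andP [].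
have HWa : forall w a, w \in Wset N A -> a \in A -> wt N w a != 0.
  move=> w a Hw Ha; case: (HW w Hw) => /fsubsetP /(_ a Ha) + _ _.
  by rewrite Hpar => /andP [].
have HWAB : forall w, w \in Wset N A -> w \notin A `|` B.
  move=> w Hw; apply/negP => Hab.
  by move: (HWa w a0 Hw Ha0); rewrite HAB0 ?eqxx // inE Ha0.
have Hni : forall w v, wt N w v != 0 -> w \notin gfnn_inputs N.
  move=> w v H; rewrite /gfnn_inputs !inE negb_and; apply/orP; right.
  apply/fset0Pn; exists v; rewrite Hpar H (proj1 (Hnod _ _ H)).
  done.
have [cas Ecas] : {b | b = (A `<=` outs N)} by exists (A `<=` outs N).
have Hcas1 : cas -> forall r u, u \in A -> lam N r u = mu r * alpha u.
  move=> Hc; case: Hiv => [/eqP /fsetP /(_ a0)|[] //].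
  by rewrite Ecas in Hc; rewrite !inE Ha0 (fsubsetP Hc _ Ha0).
have Hcas0 : ~~ cas -> forall u, u \in A -> u \notin outs N.
  move=> Hc; case: Hiv => [/eqP /fsetP H u Hu|[] H]; last by rewrite Ecas H in Hc.
  by move: (H u); rewrite !inE Hu /= => ->.
have HAni : forall u, u \in A -> u \in nodes N `\` gfnn_inputs N.
  by move=> u /(fsubsetP HA).
have Hachild : ~~ cas -> forall a, a \in A -> exists w, wt N w a != 0.
  move=> Hc a Ha; case: (Hnd1 a (HAni a Ha)) => ? [ot Ho Hr]; case/reach_inv: Hr => [E|[w [Hw _]]].
    by move: (Hcas0 Hc a Ha); rewrite E Ho.
  by exists w.
have Hal0 : alpha a0 != 0.
  case: cas Ecas Hcas1 Hcas0 Hachild => Ecas Hcas1 Hcas0 Hachild.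
    have Hao : a0 \in outs N by apply: (fsubsetP _ _ Ha0); rewrite -Ecas.
    have [r Hr] := Hnd2 a0 Hao.
    by move: Hr; rewrite (Hcas1 isT r a0 Ha0) mulf_eq0 negb_or => /andP [].
  have [w Hw] := Hachild isT a0 Ha0.
  have HwW := HWo w a0 Ha0 Hw.
  by move: Hw; case: (HW w HwW) => _ _ ->; rewrite // mulf_eq0 negb_or => /andP [].
have HS0 : a0 \in A `|` B `|` C by rewrite !inE Ha0.
have HS1 : c0 \in A `|` B `|` C by rewrite !inE Hc0 orbT.
have Hac : a0 != c0.
  by apply/negP => /eqP E; move: (HCn c0 Hc0); rewrite -E HAn.
have Hal : forall s, s \in A `|` B `|` C -> alpha s != 0 := affsym_alpha Haff HS0 Hal0.
have Hbe : forall s, s \in A `|` B `|` C -> beta s != 0 := affsym_beta Haff HS0 HS1 Hac Hal0.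
have Hmu : cas -> exists r, mu r != 0.
  move=> Hc; have Hao : a0 \in outs N by rewrite Ecas in Hc; apply: (fsubsetP Hc).
  have [r Hr] := Hnd2 a0 Hao; exists r.
  by move: Hr; rewrite (Hcas1 Hc r a0 Ha0) mulf_eq0 negb_or => /andP [].
pose cond u := (forall w, w \in nodes N -> wt N w u = (if w \in Wset N A then alpha u * nu w else 0))
   /\ (if cas then forall r, lam N r u = alpha u * mu r else u \notin outs N).
pose Bs := [fset u in B | `[< cond u >]].
have HBsE : forall u, u \in Bs -> u \in B /\ cond u.
  by move=> u; rewrite !inE => /andP [H /asboolP].
have HBsI : forall u, u \in B -> ~ u \in Bs -> ~ cond u.
  by move=> u Hu Hn Hc; apply: Hn; rewrite !inE Hu; apply/asboolP.
have HBsB : Bs `<=` B by apply/fsubsetP => u /HBsE [].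
clearbody Bs.
exists Bs => //.
have HBsA : forall u, u \in Bs -> u \notin A.
  move=> u /HBsE [Hu _]; apply/negP => Ha; move/eqP: HAB => /fsetP /(_ u).
  by rewrite !inE Ha Hu.
have HAB2 : A `|` Bs `|` (B `\` Bs) = A `|` B.
  apply/fsetP => x; rewrite !inE; case: (boolP (x \in Bs)) => Hx /=.
    by rewrite orbT (fsubsetP HBsB x Hx) orbT.
  by rewrite orbF.
have HW2 : Wset N (A `|` Bs) = Wset N A.
  apply/fsetP => w; apply/idP/idP.
    move=> H; have : (w \in nodes N) && (gfnn_par N w `&` (A `|` Bs) != fset0).
      by move: H; rewrite /Wset !inE.
    case/andP=> Hw /fset0Pn [x Hx0].
    rewrite !inE in Hx0; case/andP: Hx0 => /andP [_ Hwx] /orP [Hx|Hx]; first exact: (HWo w x Hx Hwx).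
    have [_ [Hc _]] := HBsE x Hx.
    by move: Hwx; rewrite (Hc w Hw); case: ifP => //; rewrite eqxx.
  move=> HwW; rewrite /Wset !inE (HWn _ HwW) /=; apply/fset0Pn; exists a0.
  by rewrite !inE Ha0 (HAn _ Ha0) (HWa w a0 HwW Ha0).
have Hcas2 : (A `|` Bs `<=` outs N) = cas.
  have [Hc|Hc] := boolP cas.
    have HAo : A `<=` outs N by rewrite -Ecas.
    rewrite fsubUset HAo /=; apply/fsubsetP => u Hu.
    have [r Hr] := Hmu Hc; have [HuB [_ Hcu]] := HBsE u Hu.
    rewrite Hc in Hcu.
    apply: (Hlam r); rewrite Hcu mulf_eq0 negb_or Hr andbT.
    by apply: Hal; rewrite !inE HuB orbT.
  by rewrite fsubUset -Ecas (negbTE Hc).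
pose A2 := A `|` Bs.
pose B2 := B `\` Bs.
have HA2 : forall x, (x \in A2) = (x \in A) || (x \in Bs) by move=> x; rewrite !inE.
have HB2 : forall x, (x \in B2) = (x \notin Bs) && (x \in B) by move=> x; rewrite !inE.
pose N2 := modnet N A2 B2 C P zeta alpha beta gamma kappa nu mu.
pose lamA := fun r u =>
    if u \in C then - (alpha u * mu r)
    else if u \in B2 then lam N r u - alpha u * mu r
    else if u \in A2 then 0 else lam N r u.
have wtE : forall x y, wt N2 x y =
    if (x \in A2) || (y \in A2) then 0
    else if x \in C then (if y \in P then beta x * kappa y else 0)
    else if y \in C then (if x \in Wset N A then - (alpha y * nu x) else 0)
    else if (x \in Wset N A) && (y \in B2) then wt N x y - alpha y * nu x
    else wt N x y.
  by move=> x y; rewrite /N2 /modnet /A2 HW2; case: ifP.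
have nodesE : nodes N2 = (nodes N `\` A2) `|` C.
  by rewrite /N2 /modnet; case: ifP.
have outsE : outs N2 = if cas then
      ((outs N `\` (A2 `|` B2)) `|` C) `|` [fset u in B2 | [exists r : 'I_D, lamA r u != 0]]
    else outs N.
  by rewrite /N2 /modnet /A2 Hcas2; case: ifP.
have lamE : forall r u, lam N2 r u = if cas then lamA r u else lam N r u.
  by move=> r u; rewrite /N2 /modnet /A2 Hcas2; case: ifP.
exists N2; split.
  split; first exact: Hirr.
  exists P, zeta, alpha, beta, gamma, kappa, nu, mu; split.
  - split.
    + by rewrite fsubUset HA (fsubset_trans HBsB HB).
    + exact: (fsubset_trans (fsubsetDl B Bs) HB).
    + apply/eqP/fsetP => x; rewrite in_fsetI in_fsetU in_fsetD in_fset0.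
      apply/negP => /andP [/orP [Hx|Hx] /andP [Hx1 Hx2]]; last by rewrite Hx in Hx1.
      by move/eqP: HAB => /fsetP /(_ x); rewrite in_fsetI Hx Hx2 in_fset0.
    + by apply/fset0Pn; exists a0; rewrite in_fsetU Ha0.
    + by move=> u; rewrite HAB2; exact: HPar.
  - by split.
  - by rewrite HAB2; split.
  - by rewrite HAB2; split.
  - split.
    + rewrite HW2 => w Hw; have [HAp Hnu HwA] := HW w Hw; split => //.
        rewrite fsubUset HAp /=; apply/fsubsetP => u Hu.
        have [HuB [Hc _]] := HBsE u Hu.
        rewrite Hpar (HBn _ HuB) (Hc w (HWn _ Hw)) Hw /= mulf_neq0 //.
        by apply: Hal; rewrite !in_fsetU HuB orbT.
      move=> u; rewrite in_fsetU => /orP [Hu|Hu]; first exact: HwA.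
      have [HuB [Hc _]] := HBsE u Hu.
      by rewrite (Hc w (HWn _ Hw)) Hw mulrC.
    + have [Hc|Hc] := boolP cas.
        right; split; first by rewrite Hcas2.
        move=> r u; rewrite in_fsetU => /orP [Hu|Hu]; first exact: Hcas1.
        have [_ [_ Hcu]] := HBsE u Hu; rewrite Hc in Hcu.
        by rewrite Hcu mulrC.
      left; apply/eqP/fsetP => x; rewrite in_fsetI in_fsetU in_fset0.
      apply/negP => /andP [/orP [Hx|Hx] Ho].
        by move: (Hcas0 Hc x Hx); rewrite Ho.
      have [_ [_ Hcu]] := HBsE x Hx.
      by move: Hcu; rewrite (negbTE Hc) Ho.
    + by [].
have HnC : forall x, x \in nodes N -> x \notin C.
  by move=> x Hx; apply/negP => Hc; move: (HCn x Hc); rewrite Hx.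
have HBA : forall x, x \in B -> x \notin A.
  move=> x Hx; apply/negP => Ha; move/eqP: HAB => /fsetP /(_ x).
  by rewrite in_fsetI Ha Hx in_fset0.
have HnotA2 : forall x, x \notin A -> x \notin B -> x \notin A2.
  move=> x Hx Hb; rewrite HA2 negb_or Hx /=; apply/negP => /HBsE [Hb' _].
  by rewrite Hb' in Hb.
have HB2A2 : forall x, x \in B2 -> x \notin A2.
  move=> x; rewrite HB2 HA2 => /andP [Hs Hb]; by rewrite negb_or HBA // Hs.
have HCA2 : forall c, c \in C -> c \notin A2.
  move=> c Hc; rewrite HA2 negb_or; apply/andP; split; apply/negP => H.
    by move: (HCn c Hc); rewrite HAn.
  by have [Hb _] := HBsE c H; move: (HCn c Hc); rewrite HBn.
have Eo : forall x y, x \notin A2 -> y \notin A2 -> x \notin C -> y \notin C ->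
    ~~ ((x \in Wset N A) && (y \in B2)) -> wt N2 x y = wt N x y.
  move=> x y Hx Hy Hxc Hyc Hw.
  by rewrite wtE (negbTE Hx) (negbTE Hy) /= (negbTE Hxc) (negbTE Hyc) (negbTE Hw).
have E2 : forall c y, c \in C -> y \in P -> y \notin A2 -> wt N2 c y = beta c * kappa y.
  by move=> c y Hc Hy Hy2; rewrite wtE (negbTE (HCA2 c Hc)) (negbTE Hy2) /= Hc Hy.
have HWA2 : forall w, w \in Wset N A -> w \notin A2.
  move=> w Hw; have := HWAB w Hw; rewrite in_fsetU negb_or => /andP [H1 H2].
  exact: HnotA2.
have E3 : forall w c, w \in Wset N A -> c \in C -> wt N2 w c = - (alpha c * nu w).
  move=> w c Hw Hc.
  by rewrite wtE (negbTE (HWA2 w Hw)) (negbTE (HCA2 c Hc)) /= (negbTE (HnC w (HWn w Hw))) Hc Hw.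
have E4 : forall w y, w \in Wset N A -> y \in B2 -> wt N2 w y = wt N w y - alpha y * nu w.
  move=> w y Hw Hy.
  have Hyn : y \in nodes N by move: Hy; rewrite HB2 => /andP [_ /HBn].
  rewrite wtE (negbTE (HWA2 w Hw)) (negbTE (HB2A2 y Hy)) /= (negbTE (HnC w (HWn w Hw))).
  by rewrite (negbTE (HnC y Hyn)) Hw Hy.
have N2n1 : forall x, x \in nodes N -> x \notin A2 -> x \in nodes N2.
  by move=> x Hx Hx2; rewrite nodesE in_fsetU in_fsetD Hx Hx2.
have N2n2 : forall c, c \in C -> c \in nodes N2.
  by move=> c Hc; rewrite nodesE in_fsetU Hc orbT.
pose G v := in_anc N2 (outs N2) v.
have Gout : forall v, v \in nodes N2 -> v \in outs N2 -> G v.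
  by move=> v Hv Ho; split => //; exists v => //; exact: reach0.
have Gstep : forall u v, u \in nodes N2 -> wt N2 v u != 0 -> G v -> G u.
  move=> u v Hu Hw [_ [z Hz Hr]]; split => //; exists z => //.
  exact: reachS Hw Hr.
have HoutN : forall v, v \in outs N -> v \notin A -> v \notin B -> v \in outs N2.
  move=> v Hv HvA HvB; rewrite outsE; case: cas {Ecas Hcas1 Hcas0 Hachild Hmu Hcas2 cond HBsE HBsI lamE outsE} => //.
  rewrite !in_fsetU in_fsetD Hv andbT in_fsetU negb_or (HnotA2 v HvA HvB) /=.
  by rewrite HB2 (negbTE HvB) andbF.
have HCout : cas -> forall c, c \in C -> c \in outs N2.
  by move=> Hcs c Hc; rewrite outsE Hcs !in_fsetU Hc orbT.
pose M := (\sum_(u <- nodes N) rk u)%N.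
have HrkM : forall u, u \in nodes N -> (rk u <= M)%N.
  by move=> u Hu; rewrite /M (big_fsetD1 _ Hu) /= leq_addr.
have Q1 : forall n v, v \in nodes N -> (M - rk v < n)%N ->
  (v \notin gfnn_inputs N -> v \notin A -> v \notin B -> G v) /\
  (v \in A -> forall c, c \in C -> G c).
  elim=> [//|n IH] v Hv Hlt.
  have IHc : forall w, wt N w v != 0 ->
      (w \notin gfnn_inputs N -> w \notin A -> w \notin B -> G w) /\
      (w \in A -> forall c, c \in C -> G c).
    move=> w Hw; apply: IH; first exact: (proj2 (Hnod _ _ Hw)).
    have := Hrk _ _ Hw; have := HrkM w (proj2 (Hnod _ _ Hw)); have := HrkM v Hv.
    move: Hlt; clear; lia.
  split.
  - move=> Hvi HvA HvB.
    have HvA2 := HnotA2 v HvA HvB.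
    have Hvnd : v \in nodes N `\` gfnn_inputs N by rewrite in_fsetD Hvi Hv.
    have [_ [z Hz Hr]] := Hnd1 v Hvnd.
    case/reach_inv: Hr => [E|[v1 [Hv1 _]]].
      by apply: Gout; [exact: N2n1 | apply: HoutN => //; rewrite E].
    have Hv1n := proj2 (Hnod _ _ Hv1).
    case: (boolP (v1 \in A `|` B)) => Hv1AB.
      have HvP : v \in P by rewrite (HABP v1) // Hv Hv1.
      have Ha0v : wt N a0 v != 0.
        by move: HvP; rewrite (HABP a0) ?in_fsetU ?Ha0 // => /andP [].
      have Gc := (IHc a0 Ha0v).2 Ha0 c0 Hc0.
      apply: (Gstep v c0) => //; first exact: N2n1.
      rewrite (E2 c0 v Hc0 HvP HvA2) mulf_neq0 //; last exact: Hkap.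
      by apply: Hbe; rewrite !in_fsetU Hc0 !orbT.
    have [Hv1A Hv1B] : v1 \notin A /\ v1 \notin B.
      by move: Hv1AB; rewrite in_fsetU negb_or => /andP [].
    apply: (Gstep v v1); first exact: N2n1.
      rewrite Eo //; first exact: HnotA2.
        exact: HnC.
      exact: HnC.
      by rewrite HB2 (negbTE HvB) !andbF.
    exact: (IHc v1 Hv1).1 (Hni _ _ Hv1) Hv1A Hv1B.
  - move=> HvA c Hc; have [Hcs|Hcs] := boolP cas.
      by apply: Gout; [exact: N2n2 | exact: HCout].
    have [_ [z Hz Hr]] := Hnd1 v (HAni v HvA).
    case/reach_inv: Hr => [E|[w [Hw _]]].
      by move: (Hcas0 Hcs v HvA); rewrite E Hz.
    have HwW := HWo w v HvA Hw.
    have := HWAB w HwW; rewrite in_fsetU negb_or => /andP [HwA HwB].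
    have Gw := (IHc w Hw).1 (Hni _ _ Hw) HwA HwB.
    apply: (Gstep c w) => //; first exact: N2n2.
    rewrite (E3 w c HwW Hc) oppr_eq0 mulf_neq0 //; last by case: (HW w HwW).
    by apply: Hal; rewrite !in_fsetU Hc !orbT.
have Gall1 : forall v, v \in nodes N -> v \notin gfnn_inputs N -> v \notin A -> v \notin B -> G v.
  by move=> v Hv; apply: (Q1 (M - rk v).+1 v Hv (ltnSn _)).1.
have GC : forall c, c \in C -> G c.
  by apply: (Q1 (M - rk a0).+1 a0 (HAn _ Ha0) (ltnSn _)).2.
have GB2 : forall v, v \in B2 -> G v.
  move=> v Hv; move: (Hv); rewrite HB2 => /andP [HvBs HvB].
  have HvA2 := HB2A2 v Hv.
  have Hnc := HBsI v HvB (negP HvBs).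
  have Hvn := HBn v HvB.
  case: (pselect (forall w, w \in nodes N ->
     wt N w v = (if w \in Wset N A then alpha v * nu w else 0))) => Hall.
    have Hno : ~ (if cas then forall r, lam N r v = alpha v * mu r else v \notin outs N).
      by move=> H; apply: Hnc; split.
    apply: Gout; first exact: N2n1.
    rewrite outsE; have [Hcs|Hcs] := boolP cas.
      rewrite Hcs in Hno; move/existsNP: Hno => [r Hr].
      rewrite in_fsetU; apply/orP; right.
      have Hl : lamA r v != 0.
        rewrite /lamA (negbTE (HnC v Hvn)) Hv subr_eq0; exact/eqP.
      rewrite inE /=; apply/andP; split; [exact: Hv | apply/existsP; exists r; exact: Hl].
    rewrite (negbTE Hcs) /= in Hno.
    by apply/negPn/negP.
  move/existsNP: Hall => [w /not_implyP [Hwn Hwt']].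
  case: (boolP (w \in Wset N A)) => HwW; [rewrite HwW in Hwt' | rewrite (negbTE HwW) in Hwt'].
    have := HWAB w HwW; rewrite in_fsetU negb_or => /andP [HwA HwB].
    have Gw := Gall1 w Hwn (Hni _ _ (HWa w a0 HwW Ha0)) HwA HwB.
    apply: (Gstep v w) => //; first exact: N2n1.
    by rewrite (E4 w v HwW Hv) subr_eq0; apply/eqP.
  have Hwv : wt N w v != 0 by apply/eqP.
  have [HwA HwB] : w \notin A /\ w \notin B.
    suff : w \notin A `|` B by rewrite in_fsetU negb_or => /andP [].
    apply/negP => H; have H0 : v \in A `|` B by rewrite in_fsetU HvB orbT.
    by move: Hwv; rewrite (HAB0 v w H0 H) eqxx.
  have Gw := Gall1 w Hwn (Hni _ _ Hwv) HwA HwB.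
  apply: (Gstep v w) => //; first exact: N2n1.
  rewrite Eo //; first exact: HnotA2.
    exact: HnC.
  exact: HnC.
  by rewrite (negbTE HwW).
split.
- move=> v; rewrite in_fsetD => /andP [Hvi Hv2].
  move: Hv2; rewrite nodesE in_fsetU in_fsetD => /orP [/andP [HvA2 Hvn]|Hvc]; last exact: GC.
  have HvA : v \notin A by move: HvA2; rewrite HA2 negb_or => /andP [].
  have Hvi1 : v \notin gfnn_inputs N.
    case: (boolP (v \in Wset N A)) => HvW; first exact: (Hni _ _ (HWa v a0 HvW Ha0)).
    have Hp : gfnn_par N2 v != fset0.
      apply/negP => /eqP Hp; move: Hvi.
      by rewrite /gfnn_inputs !inE Hp eqxx andbT (N2n1 v Hvn HvA2).
    move/fset0Pn: Hp => [u Hu0].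
    have Hu : wt N2 v u != 0 by move: Hu0; rewrite /gfnn_par !inE => /andP [_].
    move: Hu; rewrite wtE (negbTE HvA2) /= (negbTE (HnC v Hvn)) (negbTE HvW) /=.
    case: ifP => _; first by rewrite eqxx.
    case: ifP => _; first by rewrite eqxx.
    exact: Hni.
  case: (boolP (v \in B)) => HvB.
    apply: GB2; rewrite HB2 HvB andbT; apply/negP => Hs; move: HvA2.
    by rewrite HA2 Hs orbT.
  exact: Gall1.
- move=> w; rewrite outsE; have [Hcs|Hcs] := boolP cas => Hw /=.
    have [r0 Hr0] := Hmu Hcs.
    move: Hw; rewrite !in_fsetU => /orP [/orP [Hw|Hw]|Hw].
    + move: Hw; rewrite in_fsetD in_fsetU negb_or => /andP [/andP [HwA2 HwB2] Hwo].
      have Hwn : w \in nodes N by move: (fsubsetP Houts w Hwo); rewrite in_fsetD => /andP [].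
      have [r Hr] := Hnd2 w Hwo; exists r.
      by rewrite lamE Hcs /lamA (negbTE (HnC w Hwn)) (negbTE HwB2) (negbTE HwA2).
    + exists r0; rewrite lamE Hcs /lamA Hw oppr_eq0 mulf_neq0 //.
      by apply: Hal; rewrite !in_fsetU Hw !orbT.
    + move: Hw; rewrite inE /= => /andP [_ /existsP [r Hr]]; exists r.
      by rewrite lamE Hcs.
  have [r Hr] := Hnd2 w Hw; exists r.
  by rewrite lamE (negbTE Hcs).
Qed.
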